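(* Let $\alpha\neq0$ be real and let $u=u(x)$ be a solution of $$\frac{u''}{1-u'^2}=\frac{\alpha}{u},\qquad u>0,\quad u'^2<1,$$ defined on its maximal domain $I\subset\mathbb R$ (an interval). Then $u$ is symmetric about a vertical line, and $I=\mathbb R$ if $\alpha>0$, while $I$ is a bounded interval if $\alpha<0$. Furthermore: (1) If $\alpha>0$, then $u$ is convex with a unique global minimum, $\lim_{r\to\infty}u(r)=\infty$ and $\lim_{r\to\infty}u'(r)=1$. (2) If $\alpha<0$, then $u$ is concave with a unique global maximum, and if $I=(-b,b)$, then $\lim_{r\to b}u(r)=0$ and $\lim_{r\to b}u'(r)=-1$.
   Context: The maximal domain of $u$ is the largest interval on which the solution exists while satisfying $u>0$ and $u'^2<1$. *)

(* Defs.v *)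
From Stdlib Require Import Reals.
From Coquelicot Require Import Coquelicot.
Open Scope R_scope.

Definition open_interval (I : R -> Prop) : Prop :=
  (exists x, I x) /\ open I /\
  (forall x y z, I x -> I z -> x <= y <= z -> I y).

Definition is_solution (alpha : R) (I : R -> Prop) (u : R -> R) : Prop :=
  open_interval I /\
  forall x, I x ->
    ex_derive u x /\ ex_derive (Derive u) x /\
    0 < u x /\ (Derive u x) ^ 2 < 1 /\
    Derive (Derive u) x / (1 - (Derive u x) ^ 2) = alpha / u x.

Definition is_maximal_solution (alpha : R) (I : R -> Prop) (u : R -> R) : Prop :=
  is_solution alpha I u /\
  forall (J : R -> Prop) (v : R -> R),
    is_solution alpha J v ->
    (forall x, I x -> J x) ->
    (forall x, I x -> v x = u x) ->
    forall x, J x -> I x.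

Definition convex_on (I : R -> Prop) (u : R -> R) : Prop :=
  forall x y t, I x -> I y -> 0 <= t <= 1 ->
    u (t * x + (1 - t) * y) <= t * u x + (1 - t) * u y.

Definition concave_on (I : R -> Prop) (u : R -> R) : Prop :=
  forall x y t, I x -> I y -> 0 <= t <= 1 ->
    t * u x + (1 - t) * u y <= u (t * x + (1 - t) * y).

Definition unique_global_min (I : R -> Prop) (u : R -> R) : Prop :=
  exists x0, I x0 /\ (forall x, I x -> u x0 <= u x) /\
    (forall x1, I x1 -> (forall x, I x -> u x1 <= u x) -> x1 = x0).

Definition unique_global_max (I : R -> Prop) (u : R -> R) : Prop :=
  exists x0, I x0 /\ (forall x, I x -> u x <= u x0) /\
    (forall x1, I x1 -> (forall x, I x -> u x <= u x1) -> x1 = x0).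

Definition symmetric_about_vertical_line (I : R -> Prop) (u : R -> R) : Prop :=
  exists c, forall x, I x -> I (2 * c - x) /\ u (2 * c - x) = u x.

(* Main.v *)
From Stdlib Require Import Reals Ranalysis5 Lra ClassicalEpsilon.
From Coquelicot Require Import Coquelicot.
Require Import Defs.
Open Scope R_scope.

Definition ch t := (exp t + exp (-t)) / 2.
Definition th t := (exp t - exp (-t)) / (exp t + exp (-t)).
Definition psi t := ln (ch t).
Definition ath p := ln ((1+p)/(1-p)) / 2.

Lemma ch_pos t : 0 < ch t.
Proof. unfold ch. pose proof (exp_pos t). pose proof (exp_pos (-t)). lra. Qed.

Lemma ch_ge1 t : 1 <= ch t.
Proof.
  unfold ch. pose proof (exp_pos t) as H. rewrite exp_Ropp.
  assert (exp t + / exp t - 2 = (exp t - 1)^2 / exp t) by (field; lra).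
  assert (0 <= (exp t - 1)^2 / exp t).
  { apply Rmult_le_pos. apply pow2_ge_0. left. apply Rinv_0_lt_compat. lra. }
  lra.
Qed.

Lemma ch_gt1 t : t <> 0 -> 1 < ch t.
Proof.
  intro Ht. unfold ch. pose proof (exp_pos t) as H. rewrite exp_Ropp.
  assert (exp t + / exp t - 2 = (exp t - 1)^2 / exp t) by (field; lra).
  assert (exp t <> 1).
  { intro E. apply Ht. rewrite <- exp_0 in E. now apply exp_inv in E. }
  assert (0 < (exp t - 1)^2 / exp t).
  { apply Rdiv_lt_0_compat. assert (exp t - 1 <> 0) by lra. nra. lra. }
  lra.
Qed.

Lemma ch_even t : ch (-t) = ch t.
Proof. unfold ch. rewrite Ropp_involutive. lra. Qed.

Lemma th_odd t : th (-t) = - th t.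
Proof. unfold th. rewrite Ropp_involutive. field.
  pose proof (exp_pos t). pose proof (exp_pos (-t)). lra. Qed.

Lemma th_bound t : -1 < th t < 1.
Proof. unfold th. pose proof (exp_pos t). pose proof (exp_pos (-t)).
  split; [apply Rlt_div_r|apply Rlt_div_l]; lra. Qed.

Lemma psi_ge0 t : 0 <= psi t.
Proof. unfold psi. rewrite <- ln_1. apply ln_le. lra. apply ch_ge1. Qed.

Lemma psi_gt0 t : t <> 0 -> 0 < psi t.
Proof. intro. unfold psi. rewrite <- ln_1. apply ln_increasing. lra. now apply ch_gt1. Qed.

Lemma psi_even t : psi (-t) = psi t.
Proof. unfold psi. now rewrite ch_even. Qed.

Lemma psi_lin t : 0 <= t -> t - ln 2 <= psi t.
Proof.
  intro Ht. unfold psi.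
  assert (exp t / 2 <= ch t). { unfold ch. pose proof (exp_pos (-t)). lra. }
  assert (ln (exp t / 2) = t - ln 2).
  { unfold Rdiv. rewrite ln_mult, ln_exp, ln_Rinv.
    all: first [lra | apply exp_pos | apply Rinv_0_lt_compat; lra]. }
  rewrite <- H0. apply ln_le. pose proof (exp_pos t). lra. exact H.
Qed.

Lemma is_derive_psi t : is_derive psi t (th t).
Proof.
  unfold psi, ch, th. auto_derive.
  pose proof (exp_pos t). pose proof (exp_pos (-t)). lra.
  pose proof (exp_pos t). pose proof (exp_pos (-t)). field; lra.
Qed.

Lemma is_derive_th t : is_derive th t (1 - th t ^ 2).
Proof.
  unfold th. auto_derive.
  pose proof (exp_pos t). pose proof (exp_pos (-t)). lra.
  pose proof (exp_pos t). pose proof (exp_pos (-t)). field; lra.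
Qed.

Lemma is_derive_ath p : -1 < p < 1 -> is_derive ath p (/ (1 - p^2)).
Proof.
  intro Hp. unfold ath. auto_derive.
  split. lra. split. apply Rmult_lt_0_compat; [lra | apply Rinv_0_lt_compat; lra]. exact I.
  field. split. nra. split; lra.
Qed.

Lemma th_ath p : -1 < p < 1 -> th (ath p) = p.
Proof.
  intro Hp. unfold th, ath.
  set (z := (1+p)/(1-p)).
  assert (Hz : 0 < z) by (apply Rdiv_lt_0_compat; lra).
  assert (E : exp (ln z / 2) * exp (ln z / 2) = z).
  { rewrite <- exp_plus. replace (ln z / 2 + ln z / 2) with (ln z) by field. now apply exp_ln. }
  rewrite exp_Ropp. set (e := exp (ln z / 2)) in *.
  assert (0 < e) by apply exp_pos.
  replace ((e - / e) / (e + / e)) with ((e*e - 1)/(e*e+1)) by (field; split; nra).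
  rewrite E. unfold z. field. lra.
Qed.

Lemma derive_cont f x l : is_derive f x l -> continuity_pt f x.
Proof.
  intro H. apply continuity_pt_filterlim. apply (ex_derive_continuous f x). now exists l.
Qed.

Lemma MVT_le f df a b : a <= b ->
  (forall z, a <= z <= b -> is_derive f z (df z)) ->
  exists c, a <= c <= b /\ f b - f a = df c * (b - a).
Proof.
  intros Hab Hd.
  destruct (MVT_gen f a b df) as [c [Hc E]].
  - intros z Hz. apply Hd. rewrite Rmin_left, Rmax_right in Hz; lra.
  - intros z Hz. apply (derive_cont f z (df z)). apply Hd. rewrite Rmin_left, Rmax_right in Hz; lra.
  - exists c. split; [|exact E]. rewrite Rmin_left, Rmax_right in Hc; lra.
Qed.

Lemma const_on (f : R->R) (P : R->Prop) :
  (forall x y z, P x -> P z -> x <= y <= z -> P y) ->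
  (forall x, P x -> is_derive f x 0) -> forall x y, P x -> P y -> f x = f y.
Proof.
  intros HP Hd.
  assert (K : forall x y, x <= y -> P x -> P y -> f x = f y).
  { intros x y Hxy Hx Hy.
    destruct (MVT_le f (fun _ => 0) x y Hxy) as [c [_ E]].
    - intros z Hz. apply Hd. apply (HP x z y); auto.
    - lra. }
  intros x y Hx Hy. destruct (Rle_dec x y). now apply K. symmetry; apply K; auto; lra.
Qed.

Lemma mono_le f df a b : a <= b ->
  (forall z, a <= z <= b -> is_derive f z (df z)) ->
  (forall z, a <= z <= b -> 0 <= df z) -> f a <= f b.
Proof.
  intros Hab Hd Hp. destruct (MVT_le f df a b Hab Hd) as [c [Hc E]].
  specialize (Hp c Hc). nra.
Qed.

Lemma strict_incr f df : (forall z, is_derive f z (df z)) -> (forall z, 0 < df z) ->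
  forall x y, x < y -> f x < f y.
Proof.
  intros Hd Hp x y Hxy. apply (incr_function f m_infty p_infty df); simpl; auto.
  intros; apply Rlt_gt; auto.
Qed.

Lemma convex_aux (P : R -> Prop) f df :
  (forall x y z, P x -> P z -> x <= y <= z -> P y) ->
  (forall x, P x -> is_derive f x (df x)) ->
  (forall x y, P x -> P y -> x <= y -> df x <= df y) ->
  forall x y t, P x -> P y -> x <= y -> 0 <= t <= 1 ->
    f (t * x + (1 - t) * y) <= t * f x + (1 - t) * f y.
Proof.
  intros HP Hd Hm x y t Hx Hy Hxy Ht.
  set (z := t * x + (1 - t) * y).
  assert (Hz : x <= z <= y) by (unfold z; nra).
  assert (Pz : P z) by (apply (HP x z y); auto).
  destruct (MVT_le f df x z) as [c1 [Hc1 E1]]; [lra| |].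
  { intros w Hw. apply Hd. apply (HP x w y); auto; lra. }
  destruct (MVT_le f df z y) as [c2 [Hc2 E2]]; [lra| |].
  { intros w Hw. apply Hd. apply (HP x w y); auto; lra. }
  assert (Hc : df c1 <= df c2).
  { apply Hm; try lra; [apply (HP x c1 y)|apply (HP x c2 y)]; auto; lra. }
  assert (z - x = (1-t)*(y-x)) by (unfold z; ring).
  assert (y - z = t*(y-x)) by (unfold z; ring).
  assert (t * f x + (1 - t) * f y - f z = t*(1-t)*(y-x)*(df c2 - df c1)).
  { replace (t * f x + (1 - t) * f y - f z) with (-t * (f z - f x) + (1-t) * (f y - f z)) by ring.
    rewrite E1, E2. rewrite H, H0. ring. }
  assert (0 <= t*(1-t)*(y-x)*(df c2 - df c1)).
  { apply Rmult_le_pos; [|lra]. apply Rmult_le_pos; [|lra]. nra. }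
  lra.
Qed.

Lemma convex_of_deriv (P : R -> Prop) f df :
  (forall x y z, P x -> P z -> x <= y <= z -> P y) ->
  (forall x, P x -> is_derive f x (df x)) ->
  (forall x y, P x -> P y -> x <= y -> df x <= df y) ->
  convex_on P f.
Proof.
  intros HP Hd Hm x y t Hx Hy Ht.
  destruct (Rle_dec x y).
  - now apply (convex_aux P f df).
  - pose proof (convex_aux P f df HP Hd Hm y x (1-t) Hy Hx) as K.
    replace (t * x + (1 - t) * y) with ((1-t) * y + (1 - (1-t)) * x) by ring.
    replace (t * f x + (1 - t) * f y) with ((1-t) * f y + (1 - (1-t)) * f x) by ring.
    apply K; lra.
Qed.

Lemma concave_of_deriv (P : R -> Prop) f df :
  (forall x y z, P x -> P z -> x <= y <= z -> P y) ->
  (forall x, P x -> is_derive f x (df x)) ->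
  (forall x y, P x -> P y -> x <= y -> df y <= df x) ->
  concave_on P f.
Proof.
  intros HP Hd Hm x y t Hx Hy Ht.
  assert (C : convex_on P (fun x => - f x)).
  { apply (convex_of_deriv P _ (fun x => - df x)); auto.
    - intros w Hw. apply (is_derive_opp f w (df w)). auto.
    - intros a b Ha Hb Hab. specialize (Hm a b Ha Hb Hab). lra. }
  specialize (C x y t Hx Hy Ht). simpl in C. lra.
Qed.

Definition Finv (G : R -> R) (y : R) : R :=
  match excluded_middle_informative (exists s, G s = y) with
  | left H => proj1_sig (constructive_indefinite_description _ H)
  | right _ => 0 end.

Lemma Finv_spec G y : (exists s, G s = y) -> G (Finv G y) = y.
Proof.
  intro H. unfold Finv. destruct (excluded_middle_informative _) as [H'|H'].
  - exact (proj2_sig (constructive_indefinite_description _ H')).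
  - contradiction.
Qed.

Section Inv.
Variable G g : R -> R.
Hypothesis Hd : forall s, is_derive G s (g s).
Hypothesis Hg : forall s, 0 < g s.

Lemma G_incr : forall x y, x < y -> G x < G y.
Proof. exact (strict_incr G g Hd Hg). Qed.

Lemma G_inj x y : G x = G y -> x = y.
Proof.
  intro E. destruct (Rtotal_order x y) as [h|[h|h]]; auto.
  apply G_incr in h; lra. apply G_incr in h; lra.
Qed.

Lemma G_le x y : G x <= G y -> x <= y.
Proof. intro. destruct (Rle_dec x y); auto. assert (G y < G x) by (apply G_incr; lra). lra. Qed.

Lemma Finv_G s : Finv G (G s) = s.
Proof. apply G_inj. apply Finv_spec. now exists s. Qed.

Lemma G_cont : continuity G.
Proof. intro x. apply (derive_cont G x (g x)). apply Hd. Qed.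

Lemma G_ivt a b y : a <= b -> G a <= y <= G b -> exists s, a <= s <= b /\ G s = y.
Proof.
  intros Hab Hy.
  assert (Gab : G a <= G b).
  { destruct (Rle_lt_or_eq_dec a b Hab) as [h|h]. left; now apply G_incr. right; now subst. }
  destruct (IVT_gen G a b y G_cont) as [s [Hs E]].
  - rewrite Rmin_left, Rmax_right; lra.
  - exists s. rewrite Rmin_left, Rmax_right in Hs; auto.
Qed.

Lemma Finv_mono y1 y2 : (exists s, G s = y1) -> (exists s, G s = y2) -> y1 < y2 ->
  Finv G y1 < Finv G y2.
Proof.
  intros H1 H2 H. apply Finv_spec in H1. apply Finv_spec in H2.
  destruct (Rlt_le_dec (Finv G y1) (Finv G y2)); auto.
  destruct (Rle_lt_or_eq_dec _ _ r). apply G_incr in r0. lra. rewrite e in H2. lra.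
Qed.

Lemma Finv_deriv y : (exists s, G s = y) -> is_derive (Finv G) y (/ g (Finv G y)).
Proof.
  intro Hy. set (s0 := Finv G y).
  assert (Hs0 : G s0 = y) by (apply Finv_spec; auto).
  set (lb := s0 - 1). set (ub := s0 + 1).
  assert (Hlu : lb < ub) by (unfold lb, ub; lra).
  assert (Hlb : G lb < y) by (rewrite <- Hs0; apply G_incr; unfold lb; lra).
  assert (Hub : y < G ub) by (rewrite <- Hs0; apply G_incr; unfold ub; lra).
  assert (Hex : forall x, G lb <= x <= G ub -> exists s, lb <= s <= ub /\ G s = x).
  { intros x Hx. apply G_ivt; auto; lra. }
  assert (Heq : forall x, G lb <= x <= G ub -> G (Finv G x) = x).
  { intros x Hx. destruct (Hex x Hx) as [s [_ E]]. apply Finv_spec. eauto. }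
  assert (Hwf : forall x, G lb <= x <= G ub -> lb <= Finv G x <= ub).
  { intros x Hx. destruct (Hex x Hx) as [s [Hs E]].
    rewrite <- E, Finv_G. exact Hs. }
  assert (Hcont : continuity_pt (Finv G) y).
  { apply (continuity_pt_recip_interv G (Finv G) lb ub Hlu).
    - intros; apply G_incr; lra.
    - intros x H1 H2. unfold comp, id. apply Heq. lra.
    - intros x H1 H2. apply Hwf. lra.
    - intros a _. apply G_cont.
    - lra. }
  assert (Prf : forall a, Finv G (G lb) <= a <= Finv G (G ub) -> derivable_pt G a).
  { intros a _. exists (g a). apply is_derive_Reals. apply Hd. }
  assert (Hinc : Finv G (G lb) <= Finv G y <= Finv G (G ub)).
  { rewrite !Finv_G. fold s0. unfold lb, ub. lra. }
  apply is_derive_Reals.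
  pose proof (derivable_pt_lim_recip_interv G (Finv G) (G lb) (G ub) y
     (fun a _ => exist _ (g a) (proj1 (is_derive_Reals _ _ _) (Hd a))) Hcont
     ltac:(lra) ltac:(lra) Hinc) as K.
  simpl in K. unfold s0. replace (/ g (Finv G y)) with (1 / g (Finv G y)) by (field; apply Rgt_not_eq, Hg).
  apply K.
  - intros x Hx. unfold comp, id. apply Heq. exact Hx.
  - apply Rgt_not_eq, Hg.
Qed.

End Inv.

Definition hfun (al sg L : R) (t : R) := exp ((L + psi t)/al) * / (sg * al).
Definition Gfun al sg L s := RInt (hfun al sg L) 0 s.

Section G.
Variables al sg L : R.
Hypothesis Ha : 0 < sg * al.

Lemma al_neq : al <> 0.
Proof. intro E. rewrite E in Ha. lra. Qed.

Lemma hfun_pos t : 0 < hfun al sg L t.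
Proof. unfold hfun. apply Rmult_lt_0_compat. apply exp_pos. apply Rinv_0_lt_compat; lra. Qed.

Lemma hfun_even t : hfun al sg L (-t) = hfun al sg L t.
Proof. unfold hfun. now rewrite psi_even. Qed.

Lemma hfun_cont t : continuous (hfun al sg L) t.
Proof.
  apply (ex_derive_continuous (hfun al sg L) t). unfold hfun, psi, ch. pose proof al_neq.
  auto_derive. pose proof (exp_pos t). pose proof (exp_pos (-t)). lra.
Qed.

Lemma Gfun_deriv s : is_derive (Gfun al sg L) s (hfun al sg L s).
Proof.
  apply (is_derive_RInt (hfun al sg L) (Gfun al sg L) 0 s).
  - apply filter_forall. intro b. unfold Gfun. apply (RInt_correct (hfun al sg L) 0 b). apply (ex_RInt_continuous (hfun al sg L)).
    intros; apply hfun_cont.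
  - apply hfun_cont.
Qed.

Lemma Gfun_0 : Gfun al sg L 0 = 0.
Proof. unfold Gfun. now rewrite RInt_point. Qed.

Lemma Gfun_odd s : Gfun al sg L (-s) = - Gfun al sg L s.
Proof.
  assert (K : forall x y, True -> True -> (fun s => Gfun al sg L s + Gfun al sg L (-s)) x
            = (fun s => Gfun al sg L s + Gfun al sg L (-s)) y).
  { apply (const_on _ (fun _ => True)); auto.
    intros x _.
    replace 0 with (hfun al sg L x + (-1) * hfun al sg L (-x)) by (rewrite hfun_even; ring).
    apply (is_derive_plus (Gfun al sg L) (fun s => Gfun al sg L (-s))).
    apply Gfun_deriv.
    apply (is_derive_comp (Gfun al sg L) (fun s => -s) x (hfun al sg L (-x)) (-1)).
    apply Gfun_deriv.
    auto_derive; auto; ring. }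
  specialize (K s 0 I I). simpl in K. rewrite Ropp_0, Gfun_0 in K. lra.
Qed.

Lemma Finv_odd y : (exists s, Gfun al sg L s = y) ->
  Finv (Gfun al sg L) (-y) = - Finv (Gfun al sg L) y.
Proof.
  intro H. apply Finv_spec in H.
  rewrite <- H at 1. rewrite <- Gfun_odd.
  apply (Finv_G _ _ Gfun_deriv hfun_pos).
Qed.

End G.

Lemma range_open (G g : R -> R) c :
  (forall s, is_derive G s (g s)) -> (forall s, 0 < g s) ->
  open (fun x => exists s, G s = x - c).
Proof.
  intros Hd Hg x [s Hs].
  set (e := Rmin (G (s+1) - (x - c)) ((x - c) - G (s-1))).
  assert (H1 : G (s-1) < G s) by (apply (G_incr G g Hd Hg); lra).
  assert (H2 : G s < G (s+1)) by (apply (G_incr G g Hd Hg); lra).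
  assert (He : 0 < e) by (unfold e; apply Rmin_pos; lra).
  exists (mkposreal e He). intros y Hy. change (Rabs (y - x) < e) in Hy.
  apply Rabs_def2 in Hy.
  assert (e <= G (s+1) - (x - c)) by apply Rmin_l.
  assert (e <= (x - c) - G (s-1)) by apply Rmin_r.
  destruct (G_ivt G g Hd Hg (s-1) (s+1) (y - c)) as [t [_ Ht]]; [lra|lra|].
  now exists t.
Qed.

Lemma range_interval (G g : R -> R) c :
  (forall s, is_derive G s (g s)) -> (forall s, 0 < g s) ->
  forall x y z, (exists s, G s = x - c) -> (exists s, G s = z - c) -> x <= y <= z ->
  exists s, G s = y - c.
Proof.
  intros Hd Hg x y z [sx Hx] [sz Hz] Hy.
  assert (sx <= sz) by (apply (G_le G g Hd Hg); lra).
  destruct (G_ivt G g Hd Hg sx sz (y - c)) as [t [_ Ht]]; [lra|lra|].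
  now exists t.
Qed.

Lemma th_sg sg t : (sg = 1 \/ sg = -1) -> th (sg * t) = sg * th t.
Proof.
  intros [->| ->]. now rewrite !Rmult_1_l.
  replace (-1 * t) with (-t) by ring. rewrite th_odd. ring.
Qed.

Section Struct.
Variables (al : R) (I : R -> Prop) (u : R -> R) (sg : R).
Hypothesis Hmax : is_maximal_solution al I u.
Hypothesis Hsg : sg = 1 \/ sg = -1.
Hypothesis Ha : 0 < sg * al.

Lemma sg2 : sg * sg = 1.
Proof. destruct Hsg as [->| ->]; ring. Qed.

Lemma structure : exists L c,
  (forall x, I x <-> exists s, Gfun al sg L s = x - c) /\
  (forall x, I x -> u x = exp ((L + psi (Finv (Gfun al sg L) (x - c))) / al) /\
                   Derive u x = sg * th (Finv (Gfun al sg L) (x - c))).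
Proof.
  pose proof (al_neq al sg Ha) as Hal.
  destruct Hmax as [[[Hne [Hopen Hint]] Hsol] Hmaxl].
  set (p := Derive u). set (q := Derive p).
  assert (Hpb : forall x, I x -> -1 < p x < 1).
  { intros x Hx. destruct (Hsol x Hx) as (_ & _ & _ & H & _). fold p in H. nra. }
  assert (Hup : forall x, I x -> 0 < u x).
  { intros x Hx. apply (Hsol x Hx). }
  assert (Hq : forall x, I x -> q x = al * (1 - p x ^ 2) / u x).
  { intros x Hx. destruct (Hsol x Hx) as (_ & _ & Hu & H & E). fold p q in E, H.
    assert (1 - p x ^2 <> 0) by lra.
    replace (q x) with ((q x / (1 - p x ^2)) * (1 - p x ^ 2)) by (field; auto).
    rewrite E. field. lra. }
  assert (Hdu : forall x, I x -> is_derive u x (p x)).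
  { intros x Hx. apply Derive_correct. apply (Hsol x Hx). }
  assert (Hdp : forall x, I x -> is_derive p x (q x)).
  { intros x Hx. apply Derive_correct. apply (Hsol x Hx). }
  set (chi := fun x => sg * ath (p x)).
  assert (Hchi : forall x, I x -> is_derive chi x (sg * al / u x)).
  { intros x Hx. unfold chi.
    replace (sg * al / u x) with (sg * (q x * / (1 - p x ^ 2))).
    apply is_derive_scal.
    apply (is_derive_comp ath p x (/ (1 - p x ^2)) (q x)).
    apply is_derive_ath; auto. apply Hdp; auto.
    rewrite Hq; auto. specialize (Hpb x Hx). specialize (Hup x Hx). field. split; nra. }
  assert (Hthchi : forall x, I x -> th (chi x) = sg * p x).
  { intros x Hx. unfold chi. rewrite th_sg; auto. now rewrite th_ath; auto. }
  destruct Hne as [x0 Hx0].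
  set (E := fun x => al * ln (u x) - psi (chi x)).
  assert (HE : forall x, I x -> is_derive E x 0).
  { intros x Hx. unfold E.
    replace 0 with (al * (p x * / u x) - (sg * al / u x) * th (chi x)).
    apply (is_derive_minus (fun x => al * ln (u x)) (fun x => psi (chi x))).
    apply is_derive_scal.
    apply (is_derive_comp ln u x (/ u x) (p x)).
    apply is_derive_Reals. apply derivable_pt_lim_ln. auto. auto.
    apply (is_derive_comp psi chi x (th (chi x)) (sg * al / u x)).
    apply is_derive_psi. auto.
    rewrite Hthchi; auto. pose proof sg2. specialize (Hup x Hx).
    field_simplify; [|lra]. replace (sg^2) with (sg*sg) by ring. rewrite sg2. field. lra. }
  set (L := E x0).
  assert (Hu_form : forall x, I x -> u x = exp ((L + psi (chi x)) / al)).
  { intros x Hx. assert (EE : E x = L) by (apply (const_on E I); auto).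
    unfold E in EE. rewrite <- (exp_ln (u x)) by auto. f_equal.
    apply (Rmult_eq_reg_l al); auto. field_simplify; auto. lra. }
  set (G := Gfun al sg L). set (h := hfun al sg L).
  assert (HGd : forall s, is_derive G s (h s)) by (intro; apply Gfun_deriv; auto).
  assert (Hh : forall s, 0 < h s) by (intro; apply hfun_pos; auto).
  set (K := fun x => G (chi x) - x).
  assert (HK : forall x, I x -> is_derive K x 0).
  { intros x Hx. unfold K.
    replace 0 with ((sg * al / u x) * h (chi x) - 1).
    apply (is_derive_minus (fun x => G (chi x)) (fun x => x)).
    apply (is_derive_comp G chi x). apply HGd. auto. auto_derive; auto.
    unfold h, hfun. rewrite <- Hu_form; auto. specialize (Hup x Hx). field. lra. }
  set (c := x0 - G (chi x0)).
  assert (HGchi : forall x, I x -> G (chi x) = x - c).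
  { intros x Hx. assert (K x = K x0) by (apply (const_on K I); auto).
    unfold K in H. unfold c. lra. }
  assert (HFchi : forall x, I x -> Finv G (x - c) = chi x).
  { intros x Hx. rewrite <- HGchi by auto. apply (Finv_G G h HGd Hh). }
  set (J := fun x => exists s, G s = x - c).
  set (v := fun x => exp ((L + psi (Finv G (x - c))) / al)).
  set (Fc := fun x => Finv G (x - c)).
  assert (HFc : forall x, J x -> is_derive Fc x (/ h (Fc x))).
  { intros x Hx. unfold Fc.
    replace (/ h (Finv G (x - c))) with (1 * / h (Finv G (x - c))) by ring.
    apply (is_derive_comp (Finv G) (fun x => x - c) x).
    apply (Finv_deriv G h HGd Hh). exact Hx.
    auto_derive; auto; ring. }
  assert (HJo : open J) by (apply (range_open G h c HGd Hh)).
  assert (Hdv : forall x, J x -> is_derive v x (sg * th (Fc x))).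
  { intros x Hx. unfold v. fold (Fc x).
    assert (is_derive (fun x => exp ((L + psi (Fc x)) / al)) x
              (exp ((L + psi (Fc x)) / al) * ((th (Fc x) * / h (Fc x)) / al))).
    { auto_derive.
      split. exists (th (Fc x)). apply is_derive_psi.
      split. exists (/ h (Fc x)). apply HFc; auto. auto.
      replace (Derive (fun x1 => psi x1) (Fc x)) with (th (Fc x)) by (symmetry; apply is_derive_unique; apply is_derive_psi).
      replace (Derive (fun x1 => Fc x1) x) with (/ h (Fc x)) by (symmetry; apply is_derive_unique; apply HFc; auto). unfold Rdiv. field. split; auto.
      apply Rgt_not_eq, Hh. }
    unfold Fc in *.
    replace (sg * th (Finv G (x - c))) with
      (exp ((L + psi (Finv G (x - c))) / al) * (th (Finv G (x - c)) * / h (Finv G (x - c)) / al)).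
    exact H.
    unfold h, hfun. field. split; auto. split. intro; subst; lra. apply Rgt_not_eq, exp_pos. }
  assert (Hsolv : is_solution al J v).
  { split.
    - split. exists c. exists 0. unfold G. rewrite Gfun_0 by auto. change (@eq R 0 (c - c)). ring.
      split. exact HJo. apply (range_interval G h c HGd Hh).
    - intros x Hx.
      assert (HDv : locally x (fun z => sg * th (Fc z) = Derive v z)).
      { apply (locally_open J); auto. intros z Hz. symmetry. apply is_derive_unique. auto. }
      assert (HDDv : is_derive (Derive v) x (sg * (/ h (Fc x) * (1 - th (Fc x) ^ 2)))).
      { apply (is_derive_ext_loc _ _ x _ HDv).
        apply is_derive_scal.
        apply (is_derive_comp th Fc x). apply is_derive_th. auto. }
      rewrite (is_derive_unique _ _ _ (Hdv x Hx)).
      rewrite (is_derive_unique _ _ _ HDDv).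
      pose proof (th_bound (Fc x)).
      split. exists (sg * th (Fc x)). auto.
      split. exists (sg * (/ h (Fc x) * (1 - th (Fc x) ^ 2))). auto.
      split. apply exp_pos.
      split. replace ((sg * th (Fc x))^2) with ((sg * sg) * th (Fc x) ^2) by ring.
      rewrite sg2. nra.
      replace ((sg * th (Fc x))^2) with ((sg * sg) * th (Fc x) ^2) by ring. rewrite sg2.
      unfold h, hfun, v. fold (Fc x). unfold Rdiv.
      assert (0 < exp ((L + psi (Fc x)) * / al)) by apply exp_pos.
      assert (1 - th (Fc x) ^ 2 <> 0) by nra.
      destruct Hsg as [E1|E1]; rewrite E1 in *; field; repeat split; lra. }
  assert (HIJ : forall x, I x -> J x).
  { intros x Hx. exists (chi x). auto. }
  assert (Hvu : forall x, I x -> v x = u x).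
  { intros x Hx. unfold v. rewrite HFchi, Hu_form; auto. }
  pose proof (Hmaxl J v Hsolv HIJ Hvu) as HJI.
  exists L, c. split.
  - intro x. split. apply HIJ. apply HJI.
  - intros x Hx. fold G. rewrite HFchi by auto. split. auto.
    fold p. rewrite Hthchi by auto. rewrite <- Rmult_assoc, sg2. ring.
Qed.

End Struct.

Lemma th_le a b : a <= b -> th a <= th b.
Proof.
  intro H. destruct (Rle_lt_or_eq_dec a b H) as [h|h]; [|subst; lra].
  left. apply (strict_incr th (fun t => 1 - th t ^ 2)); auto.
  apply is_derive_th. intro z. pose proof (th_bound z). nra.
Qed.

Lemma th_close Y : 0 <= Y -> 1 - th Y <= 2 / (1 + Y).
Proof.
  intro HY. unfold th. rewrite exp_Ropp. pose proof (exp_pos Y) as He.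
  pose proof (exp_ineq1_le Y).
  replace (1 - (exp Y - / exp Y) / (exp Y + / exp Y)) with (2 / (exp Y * exp Y + 1))
    by (field; split; nra).
  apply Rmult_le_compat_l; [lra|]. apply Rinv_le_contravar; nra.
Qed.

Lemma psi_0 : psi 0 = 0.
Proof. unfold psi, ch. rewrite Ropp_0, exp_0. replace ((1+1)/2) with 1 by field. apply ln_1. Qed.

Section Common.
Variables (al : R) (I : R -> Prop) (u : R -> R) (sg L c : R).
Hypothesis Ha : 0 < sg * al.
Hypothesis HI : forall x, I x <-> exists s, Gfun al sg L s = x - c.
Hypothesis Hu : forall x, I x -> u x = exp ((L + psi (Finv (Gfun al sg L) (x - c))) / al) /\
                   Derive u x = sg * th (Finv (Gfun al sg L) (x - c)).

Local Notation G := (Gfun al sg L).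
Local Notation F := (Finv (Gfun al sg L)).
Let Hd : forall s, is_derive G s (hfun al sg L s) := Gfun_deriv al sg L Ha.
Let Hp : forall s, 0 < hfun al sg L s := hfun_pos al sg L Ha.

Lemma F0 : F 0 = 0.
Proof. rewrite <- (Gfun_0 al sg L) at 1 by auto. apply (Finv_G G _ Hd Hp). Qed.

Lemma Ic : I c.
Proof. apply HI. exists 0. rewrite Gfun_0 by auto. change (@eq R 0 (c - c)). ring. Qed.

Lemma sym : symmetric_about_vertical_line I u.
Proof.
  exists c. intros x Hx. pose proof Hx as Hx'. apply HI in Hx'. destruct Hx' as [s Hs].
  assert (I2 : I (2 * c - x)).
  { apply HI. exists (-s). rewrite Gfun_odd by auto. rewrite Hs. change (@eq R (- (x - c)) (2 * c - x - c)). ring. }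
  split; auto.
  rewrite (proj1 (Hu _ I2)), (proj1 (Hu _ Hx)).
  replace (2 * c - x - c) with (- (x - c)) by ring.
  rewrite Finv_odd by (auto; exists s; auto). now rewrite psi_even.
Qed.

Lemma F_mono x y : I x -> I y -> x <= y -> F (x - c) <= F (y - c).
Proof.
  intros Hx Hy Hxy. destruct (Rle_lt_or_eq_dec x y Hxy) as [h|h]; [|subst; lra].
  left. apply (Finv_mono G _ Hd Hp). now apply HI. now apply HI. lra.
Qed.

Lemma F_zero x : I x -> F (x - c) = 0 -> x = c.
Proof.
  intros Hx E. apply HI in Hx. apply Finv_spec in Hx. 
  rewrite E in Hx. rewrite Gfun_0 in Hx by auto. lra.
Qed.


End Common.

Lemma exp_mono a b : a <= b -> exp a <= exp b.
Proof. intro H. destruct (Rle_lt_or_eq_dec a b H) as [h|h]. left; now apply exp_increasing. subst; lra. Qed.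

Section Pos.
Variables (al : R) (I : R -> Prop) (u : R -> R) (L c : R).
Hypothesis Hal : 0 < al.
Hypothesis Hsol : is_solution al I u.
Hypothesis HI : forall x, I x <-> exists s, Gfun al 1 L s = x - c.
Hypothesis Hu : forall x, I x -> u x = exp ((L + psi (Finv (Gfun al 1 L) (x - c))) / al) /\
                   Derive u x = 1 * th (Finv (Gfun al 1 L) (x - c)).
Let Ha : 0 < 1 * al. Proof. lra. Qed.
Local Notation G := (Gfun al 1 L).
Local Notation F := (Finv (Gfun al 1 L)).
Local Notation h := (hfun al 1 L).
Let Hd : forall s, is_derive G s (h s) := Gfun_deriv al 1 L Ha.
Let Hp : forall s, 0 < h s := hfun_pos al 1 L Ha.

Lemma pos_all : forall x, I x.
Proof.
  set (m := exp (L / al) * / (1 * al)).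
  assert (Hm : 0 < m) by (unfold m; apply Rmult_lt_0_compat; [apply exp_pos|apply Rinv_0_lt_compat; lra]).
  assert (Hhm : forall t, m <= h t).
  { intro t. unfold m, hfun. apply Rmult_le_compat_r. left; apply Rinv_0_lt_compat; lra.
    apply exp_mono. unfold Rdiv. apply Rmult_le_compat_r. left; apply Rinv_0_lt_compat; lra.
    pose proof (psi_ge0 t). lra. }
  assert (HG : forall s, 0 <= s -> m * s <= G s).
  { intros s Hs.
    pose proof (mono_le (fun s => G s - m * s) (fun s => h s - m) 0 s Hs) as K.
    simpl in K. rewrite Gfun_0 in K by auto.
    assert (0 - m * 0 <= G s - m * s); [|lra].
    apply K.
    - intros z _. apply (is_derive_minus G (fun s => m * s)). apply Hd.
      auto_derive; auto; ring.
    - intros z _. specialize (Hhm z). lra. }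
  intro x. apply HI.
  set (y := x - c). set (S := Rabs y / m).
  assert (HS : 0 <= S) by (unfold S; apply Rmult_le_pos; [apply Rabs_pos|left; apply Rinv_0_lt_compat; lra]).
  assert (mS : m * S = Rabs y) by (unfold S; field; lra).
  pose proof (HG S HS). pose proof (Gfun_odd al 1 L Ha S).
  pose proof (Rle_abs y). pose proof (Rle_abs (-y)). rewrite Rabs_Ropp in *.
  destruct (G_ivt G h Hd Hp (-S) S y) as [s [_ Hs]]; [lra|lra|].
  now exists s.
Qed.

Lemma Hdu x : I x -> is_derive u x (Derive u x).
Proof. intro Hx. apply Derive_correct. apply (proj2 Hsol x Hx). Qed.

Lemma pos_convex : convex_on I u.
Proof.
  destruct Hsol as [[_ [_ Hint]] _].
  apply (convex_of_deriv I u (Derive u) Hint Hdu).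
  intros x y Hx Hy Hxy. rewrite (proj2 (Hu x Hx)), (proj2 (Hu y Hy)).
  apply Rmult_le_compat_l; [lra|]. apply th_le. apply (F_mono al I 1 L c Ha HI); auto.
Qed.

Lemma pos_min : unique_global_min I u.
Proof.
  exists c. pose proof (Ic al I 1 L c HI) as Hc. split; auto.
  assert (Huc : u c = exp (L / al)).
  { rewrite (proj1 (Hu c Hc)). replace (c - c) with 0 by ring. rewrite F0 by auto.
    rewrite psi_0, Rplus_0_r. reflexivity. }
  split.
  - intros x Hx. rewrite Huc, (proj1 (Hu x Hx)). apply exp_mono.
    unfold Rdiv. apply Rmult_le_compat_r. left; apply Rinv_0_lt_compat; lra.
    pose proof (psi_ge0 (F (x - c))). lra.
  - intros x1 Hx1 Hmin. specialize (Hmin c Hc).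
    apply (F_zero al I 1 L c HI); auto.
    destruct (Req_dec (F (x1 - c)) 0) as [E|E]; auto. exfalso.
    rewrite Huc, (proj1 (Hu x1 Hx1)) in Hmin.
    assert (exp (L / al) < exp ((L + psi (F (x1 - c))) / al)); [|lra].
    apply exp_increasing. unfold Rdiv. apply Rmult_lt_compat_r. apply Rinv_0_lt_compat; lra.
    pose proof (psi_gt0 _ E). lra.
Qed.

Lemma pos_big T x : x - c > G T -> F (x - c) > T.
Proof.
  intro H. rewrite <- (Finv_G G h Hd Hp T) at 1.
  apply (Finv_mono G h Hd Hp). now exists T. apply HI, pos_all. lra.
Qed.

Lemma pos_lim_u : is_lim u p_infty p_infty.
Proof.
  apply is_lim_spec. simpl. intro M.
  set (T := Rmax 0 (al * ln (Rabs M + 1) - L + ln 2 + 1)).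
  exists (c + G T). intros x Hx.
  assert (HY : F (x - c) > T) by (apply pos_big; lra).
  assert (T0 : 0 <= T) by apply Rmax_l.
  assert (T1 : al * ln (Rabs M + 1) - L + ln 2 + 1 <= T) by apply Rmax_r.
  pose proof (psi_lin (F (x - c)) ltac:(lra)).
  rewrite (proj1 (Hu x (pos_all x))).
  assert (ln (Rabs M + 1) < (L + psi (F (x - c))) / al).
  { apply (Rmult_lt_reg_l al); auto. unfold Rdiv. field_simplify; lra. }
  apply exp_increasing in H0. rewrite exp_ln in H0.
  pose proof (Rle_abs M). lra. pose proof (Rabs_pos M). lra.
Qed.

Lemma pos_lim_du : is_lim (Derive u) p_infty 1.
Proof.
  apply is_lim_spec. simpl. intro eps.
  set (T := 2 / eps).
  assert (T0 : 0 < T) by (unfold T; apply Rdiv_lt_0_compat; [lra| apply cond_pos]).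
  exists (c + G T). intros x Hx.
  assert (HY : F (x - c) > T) by (apply pos_big; lra).
  rewrite (proj2 (Hu x (pos_all x))).
  pose proof (th_close (F (x - c)) ltac:(lra)).
  pose proof (th_bound (F (x - c))).
  rewrite Rabs_left by lra.
  assert (2 / (1 + F (x - c)) < eps); [|lra].
  pose proof (cond_pos eps).
  apply (Rmult_lt_reg_r (1 + F (x - c))). lra. unfold Rdiv.
  rewrite Rmult_assoc, Rinv_l by lra.
  unfold T in HY. assert (eps * F (x - c) > 2).
  { apply (Rmult_lt_compat_l eps) in HY; auto. unfold Rdiv in HY.
    rewrite <- Rmult_assoc, (Rmult_comm eps 2), Rmult_assoc, Rinv_r in HY; lra. }
  lra.
Qed.

End Pos.

Lemma div_neg_le al A B : al < 0 -> B <= A -> A / al <= B / al.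
Proof.
  intros Ha H. unfold Rdiv. assert (/ al < 0) by (apply Rinv_lt_0_compat; lra). nra.
Qed.

Lemma div_neg_lt al A B : al < 0 -> B < A -> A / al < B / al.
Proof.
  intros Ha H. unfold Rdiv. assert (/ al < 0) by (apply Rinv_lt_0_compat; lra). nra.
Qed.

Section Neg.
Variables (al : R) (I : R -> Prop) (u : R -> R) (L c : R).
Hypothesis Hal : al < 0.
Hypothesis Hsol : is_solution al I u.
Hypothesis HI : forall x, I x <-> exists s, Gfun al (-1) L s = x - c.
Hypothesis Hu : forall x, I x -> u x = exp ((L + psi (Finv (Gfun al (-1) L) (x - c))) / al) /\
                   Derive u x = -1 * th (Finv (Gfun al (-1) L) (x - c)).
Let Ha : 0 < -1 * al. Proof. lra. Qed.
Local Notation G := (Gfun al (-1) L).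
Local Notation F := (Finv (Gfun al (-1) L)).
Local Notation h := (hfun al (-1) L).
Let Hd : forall s, is_derive G s (h s) := Gfun_deriv al (-1) L Ha.
Let Hp : forall s, 0 < h s := hfun_pos al (-1) L Ha.

Lemma neg_G_bound : exists B, forall s, Rabs (G s) <= B.
Proof.
  set (C := exp ((L - ln 2) / al) * / (-1 * al)).
  assert (HC : 0 < C) by (unfold C; apply Rmult_lt_0_compat; [apply exp_pos|apply Rinv_0_lt_compat; lra]).
  assert (Hh : forall t, 0 <= t -> h t <= C * exp (t / al)).
  { intros t Ht. unfold C, hfun.
    replace (exp ((L - ln 2) / al) * / (-1 * al) * exp (t / al)) with
      (exp ((L - ln 2) / al) * exp (t / al) * / (-1 * al)) by ring.
    rewrite <- exp_plus.
    apply Rmult_le_compat_r. left; apply Rinv_0_lt_compat; lra.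
    apply exp_mono. pose proof (psi_lin t Ht).
    replace ((L - ln 2) / al + t / al) with ((L - ln 2 + t) / al) by (field; lra).
    apply div_neg_le; lra. }
  set (P := fun s => C * (-1 * al) * (1 - exp (s / al))).
  assert (HP : forall s, is_derive P s (C * exp (s / al))).
  { intro s. unfold P. auto_derive; auto. unfold Rdiv. field. lra. }
  assert (HG : forall s, 0 <= s -> 0 <= G s <= C * (-1 * al)).
  { intros s Hs. split.
    - rewrite <- (Gfun_0 al (-1) L). apply (mono_le G h 0 s Hs); auto. intros; left; auto.
    - pose proof (mono_le (fun s => P s - G s) (fun s => C * exp (s / al) - h s) 0 s Hs) as K.
      simpl in K. rewrite Gfun_0 in K.
      assert (P 0 - 0 <= P s - G s).
      { apply K. intros z _. apply (is_derive_minus P G). auto. auto.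
        intros z Hz. specialize (Hh z ltac:(lra)). lra. }
      unfold P in H. rewrite Rdiv_0_l, exp_0 in H.
      assert (0 < exp (s / al)) by apply exp_pos.
      assert (0 < C * (-1 * al)) by (apply Rmult_lt_0_compat; lra). nra. }
  exists (C * (-1 * al)). intro s. destruct (Rle_dec 0 s).
  - specialize (HG s r). rewrite Rabs_right; lra.
  - specialize (HG (-s) ltac:(lra)). rewrite Gfun_odd in HG by auto.
    rewrite Rabs_left1; lra.
Qed.

Lemma neg_bounded : exists a b, forall x, I x -> a < x < b.
Proof.
  destruct neg_G_bound as [B HB]. exists (c - B - 1), (c + B + 1).
  intros x Hx. apply HI in Hx. destruct Hx as [s Hs]. specialize (HB s).
  rewrite Hs in HB. apply Rabs_le_between' in HB. lra.
Qed.

Lemma Hdu' x : I x -> is_derive u x (Derive u x).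
Proof. intro Hx. apply Derive_correct. apply (proj2 Hsol x Hx). Qed.

Lemma neg_concave : concave_on I u.
Proof.
  destruct Hsol as [[_ [_ Hint]] _].
  apply (concave_of_deriv I u (Derive u) Hint Hdu').
  intros x y Hx Hy Hxy. rewrite (proj2 (Hu x Hx)), (proj2 (Hu y Hy)).
  assert (th (F (x - c)) <= th (F (y - c))); [|lra].
  apply th_le. apply (F_mono al I (-1) L c Ha HI); auto.
Qed.

Lemma neg_max : unique_global_max I u.
Proof.
  exists c. pose proof (Ic al I (-1) L c HI) as Hc. split; auto.
  assert (Huc : u c = exp (L / al)).
  { rewrite (proj1 (Hu c Hc)). replace (c - c) with 0 by ring. rewrite F0 by auto.
    rewrite psi_0, Rplus_0_r. reflexivity. }
  split.
  - intros x Hx. rewrite Huc, (proj1 (Hu x Hx)). apply exp_mono.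
    pose proof (psi_ge0 (F (x - c))).
    apply div_neg_le; lra.
  - intros x1 Hx1 Hmax. specialize (Hmax c Hc).
    apply (F_zero al I (-1) L c HI); auto.
    destruct (Req_dec (F (x1 - c)) 0) as [E|E]; auto. exfalso.
    rewrite Huc, (proj1 (Hu x1 Hx1)) in Hmax.
    assert (exp ((L + psi (F (x1 - c))) / al) < exp (L / al)); [|lra].
    apply exp_increasing.
    pose proof (psi_gt0 _ E).
    apply div_neg_lt; lra.
Qed.

Lemma neg_lims b : (forall x, I x <-> - b < x < b) ->
  filterlim u (at_left b) (locally 0) /\ filterlim (Derive u) (at_left b) (locally (-1)).
Proof.
  intro Hb.
  pose proof (Ic al I (-1) L c HI) as Hc.
  pose proof (proj1 (Hb c) Hc) as Hcb.
  assert (Hsym : forall x, I x -> I (2 * c - x)).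
  { intros x Hx. destruct (sym al I u (-1) L c Ha HI Hu) as [c' Hc'].
    apply HI in Hx. destruct Hx as [s Hs]. apply HI. exists (-s).
    rewrite Gfun_odd, Hs by auto. change (@eq R (- (x - c)) (2 * c - x - c)). ring. }
  assert (c0 : c = 0).
  { destruct (Rtotal_order c 0) as [h|[h|h]]; auto; exfalso.
    - assert (I (b + c)) by (apply Hb; lra).
      apply Hsym, Hb in H. lra.
    - assert (I (-b + c)) by (apply Hb; lra).
      apply Hsym, Hb in H. lra. }
  assert (Hbig : forall T, 0 <= T -> exists d : posreal, forall y, Rabs (y - b) < d -> y < b ->
             I y /\ F (y - c) > T).
  { intros T HT.
    assert (IT : I (G T + c)) by (apply HI; exists T; unfold Rminus; rewrite Rplus_assoc, Rplus_opp_r, Rplus_0_r; reflexivity).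
    apply Hb in IT.
    assert (Hd0 : 0 < b - G T) by lra.
    exists (mkposreal _ Hd0). simpl. intros y Hy Hyb.
    apply Rabs_def2 in Hy.
    assert (Iy : I y) by (apply Hb; lra). split; auto.
    rewrite <- (Finv_G G h Hd Hp T) at 1.
    apply (Finv_mono G h Hd Hp). now exists T. apply HI, Iy. lra. }
  split.
  - apply filterlim_locally. intro eps. unfold at_left, within.
    set (T := Rmax 0 (al * ln eps - L + ln 2 + 1)).
    assert (T0 : 0 <= T) by apply Rmax_l.
    assert (T1 : al * ln eps - L + ln 2 + 1 <= T) by apply Rmax_r.
    destruct (Hbig T T0) as [d Hd'].
    exists d. intros y Hy Hyb. destruct (Hd' y Hy Hyb) as [Iy HY].
    change (Rabs (u y - 0) < eps).
    rewrite (proj1 (Hu y Iy)).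
    pose proof (psi_lin (F (y - c)) ltac:(lra)).
    pose proof (cond_pos eps).
    rewrite Rminus_0_r, Rabs_right by (left; apply exp_pos).
    rewrite <- (exp_ln eps) by auto. apply exp_increasing.
    replace (ln eps) with ((al * ln eps) / al) by (field; lra).
    apply div_neg_lt; lra.
  - apply filterlim_locally. intro eps. unfold at_left, within.
    pose proof (cond_pos eps).
    set (T := 2 / eps).
    assert (T0 : 0 < T) by (unfold T; apply Rdiv_lt_0_compat; lra).
    destruct (Hbig T ltac:(lra)) as [d Hd'].
    exists d. intros y Hy Hyb. destruct (Hd' y Hy Hyb) as [Iy HY].
    change (Rabs (Derive u y - -1) < eps).
    rewrite (proj2 (Hu y Iy)).
    pose proof (th_close (F (y - c)) ltac:(lra)).
    pose proof (th_bound (F (y - c))).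
    rewrite Rabs_right by lra.
    assert (2 / (1 + F (y - c)) < eps); [|lra].
    apply (Rmult_lt_reg_r (1 + F (y - c))). lra. unfold Rdiv.
    rewrite Rmult_assoc, Rinv_l by lra.
    unfold T in HY. assert (eps * F (y - c) > 2).
    { apply (Rmult_lt_compat_l eps) in HY; auto. unfold Rdiv in HY.
      rewrite <- Rmult_assoc, (Rmult_comm eps 2), Rmult_assoc, Rinv_r in HY; lra. }
    lra.
Qed.

End Neg.

Theorem theorem2p2 (alpha : R) (I : R -> Prop) (u : R -> R) :
  alpha <> 0 ->
  is_maximal_solution alpha I u ->
  symmetric_about_vertical_line I u /\
  (0 < alpha ->
     (forall x, I x) /\
     convex_on I u /\ unique_global_min I u /\
     is_lim u p_infty p_infty /\
     is_lim (Derive u) p_infty 1) /\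
  (alpha < 0 ->
     (exists a b, forall x, I x -> a < x < b) /\
     concave_on I u /\ unique_global_max I u /\
     (forall b, (forall x, I x <-> - b < x < b) ->
        filterlim u (at_left b) (locally 0) /\
        filterlim (Derive u) (at_left b) (locally (-1)))).
Proof.
  intros Hne Hmax.
  pose proof (proj1 Hmax) as Hsol.
  destruct (Rtotal_order alpha 0) as [Hneg|[H0|Hpos]]; [|contradiction|].
  - assert (Ha : 0 < -1 * alpha) by lra.
    destruct (structure alpha I u (-1) Hmax (or_intror eq_refl) Ha) as [L [c [HI Hu]]].
    split. exact (sym alpha I u (-1) L c Ha HI Hu).
    split. intro; lra.
    intros _. split. apply (neg_bounded alpha I L c); auto.
    split. apply (neg_concave alpha I u L c); auto.
    split. apply (neg_max alpha I u L c); auto.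
    apply (neg_lims alpha I u L c); auto.
  - assert (Ha : 0 < 1 * alpha) by lra.
    destruct (structure alpha I u 1 Hmax (or_introl eq_refl) Ha) as [L [c [HI Hu]]].
    split. exact (sym alpha I u 1 L c Ha HI Hu).
    split; [|intro; lra].
    intros _. split. apply (pos_all alpha I L c); auto.
    split. apply (pos_convex alpha I u L c); auto.
    split. apply (pos_min alpha I u L c); auto.
    split. apply (pos_lim_u alpha I u L c); auto.
    apply (pos_lim_du alpha I u L c); auto.
Qed.
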